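(* Let $\mathbb{F}_q$ be the finite field with $q$ elements and characteristic $p$, let $m$ be a positive integer dividing $q-1$, let $H\subseteq\mathbb{F}_q^*$ be the multiplicative subgroup of index $m$, and let $k$ be an integer with $1\le k\le (q-1)/m$. Let $M_H(k,0)$ be the number of $k$-element subsets $S\subseteq H$ with $\sum_{a\in S}a=0$. Then $$\left|M_H(k,0)-\frac1q\binom{(q-1)/m}{k}\right|\le\binom{\sqrt q+k-1+\frac{q}{mp}}{k}.$$
   Context: For a real number $t$ and a nonnegative integer $k$, $\binom{t}{k}=\frac{t(t-1)\cdots(t-k+1)}{k!}$. *)

(* Defs.v *)
From HB Require Import structures.
From mathcomp Require Import all_boot all_order all_algebra all_fingroup.
From mathcomp Require Import reals.
Set Implicit Arguments. Unset Strict Implicit. Unset Printing Implicit Defensive.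
Import Order.TTheory GRing.Theory Num.Theory.
Local Open Scope ring_scope.

Definition binomR (R : realType) (t : R) (k : nat) : R :=
  (\prod_(i < k) (t - i%:R)) / (k`!)%:R.

Definition M_H (F : finFieldType) (H : {set {unit F}}) (k : nat) : nat :=
  #|[set S : {set {unit F}} | [&& S \subset H, #|S| == k
       & \sum_(a in S) FinRing.uval a == 0]]|.

(* Main.v *)
Require Import Defs.
From HB Require Import structures.
From mathcomp Require Import all_boot all_order all_algebra all_field all_fingroup.
From mathcomp Require Import reals complex.
From mathcomp Require Import zify ring.
Import Order.TTheory GRing.Theory Num.Theory.
Local Open Scope ring_scope.


Section Newton.
Variables (C : comNzRingType) (I : finType) (x : I -> C) (A : {set I}).

Definition esym (j : nat) : C :=
  \sum_(S : {set I} | (S \subset A) && (#|S| == j)) \prod_(a in S) x a.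
Definition psum (i : nat) : C := \sum_(a in A) x a ^+ i.
Definition Tn (j i : nat) : C :=
  \sum_(S : {set I} | (S \subset A) && (#|S| == j))
     \sum_(a in A :\: S) x a ^+ i * \prod_(b in S) x b.
Definition Un (j i : nat) : C :=
  \sum_(S : {set I} | (S \subset A) && (#|S| == j))
     \sum_(a in S) x a ^+ i * \prod_(b in S) x b.

Lemma esym_psum j i : esym j * psum i = Tn j i + Un j i.
Proof.
rewrite /esym /Tn /Un -big_split /= mulr_suml; apply: eq_bigr => S /andP[SA _].
rewrite mulrC mulr_suml (big_setID S) /= addrC; congr (_ + _).
by rewrite (setIidPr SA).
Qed.

Lemma Un0 j : Un j 0 = j%:R * esym j.
Proof.
rewrite /Un /esym mulr_sumr; apply: eq_bigr => S /andP[_ /eqP <-].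
transitivity (\sum_(a in S) \prod_(b in S) x b).
  by apply: eq_bigr => a _; rewrite expr0 mul1r.
by rewrite sumr_const mulr_natl.
Qed.

Lemma Un_0 i : Un 0 i = 0.
Proof.
rewrite /Un; apply: big1 => S /andP[_ /eqP/cards0_eq ->]. by apply: big_pred0 => a; rewrite inE.
Qed.

Lemma Tn_shift j i : Tn j i.+1 = Un j.+1 i.
Proof.
rewrite /Tn /Un.
rewrite [LHS](eq_bigr _ (fun S _ => big_mkcond _ _)) [RHS](eq_bigr _ (fun S _ => big_mkcond _ _)).
rewrite exchange_big [RHS]exchange_big /=; apply: eq_bigr => a _.
rewrite -!big_mkcondr /=.
have [aA|aNA] := boolP (a \in A); last first.
  rewrite !big1 // => S /andP[/andP[SA _]] aS; case/negP: aNA.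
    by apply: (subsetP SA).
  by move: aS; rewrite inE => /andP[].
rewrite [RHS](reindex_onto (fun S => a |: S) (fun S => S :\ a)) /=; last first.
  by move=> S /andP[_ aS]; rewrite setD1K.
apply: eq_big => [S|S]; last first.
  move=> /andP[_ aS].
  move: aS; rewrite inE => /andP[aNS _].
  by rewrite big_setU1 //= exprSr -mulrA.
  have [aS|aNS] := boolP (a \in S).
    rewrite !inE aS /= andbF.
    have -> : ((a |: S) :\ a == S) = false.
      by apply/negbTE/eqP => hS; move: aS; rewrite -hS !inE eqxx.
    by rewrite andbF.
  rewrite !inE aA aNS /= setU1K // eqxx !andbT cardsU1 aNS add1n eqSS subUset sub1set aA.
  by rewrite eqxx andbT.
Qed.

Lemma newton k :
  k.+1%:R * esym k.+1 = \sum_(i < k.+1) (-1) ^+ i * (esym (k - i) * psum i.+1).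
Proof.
pose a i := Tn (k - i) i.+1.
have hb : forall i : 'I_k.+1, esym (k - i) * psum i.+1 =
   a i + (if (i < k)%N then a i.+1 else 0).
  move=> [i hi] /=; rewrite esym_psum /a; congr (_ + _).
  case: ltnP => hik.
    by rewrite Tn_shift; congr Un; rewrite subnS prednK // subn_gt0.
  have -> : (k - i = 0)%N by apply/eqP; rewrite subn_eq0.
  by rewrite Un_0.
under eq_bigr do rewrite hb mulrDr.
rewrite big_split /= [X in _ = X + _]big_ord_recl [X in _ = _ + X]big_ord_recr /= ltnn mulr0 addr0.
rewrite expr0 mul1r {1}/a subn0 Tn_shift Un0 -addrA.
rewrite [X in _ = _ + X](_ : _ = 0) ?addr0 //.
rewrite -big_split /=; apply: big1 => i _.
rewrite /bump /= add1n ltn_ord exprS mulN1r mulNr.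
by rewrite addNr.
Qed.

End Newton.
Arguments esym {C I} x A j.
Arguments psum {C I} x A i.

Lemma esym0 (C : comNzRingType) (I : finType) (x : I -> C) (A : {set I}) :
  esym x A 0 = 1.
Proof.
rewrite /esym (big_pred1 set0) ?big_set0 // => S /=.
by rewrite cards_eq0; case: eqP => [->|]; rewrite ?sub0set ?andbF.
Qed.


Section Growth.
Variables (K : numFieldType) (t : K).
Hypothesis t1 : 1 <= t.

Definition gg (n : nat) : K := \prod_(i < n) ((t + i%:R) / (i.+1)%:R).

Lemma ggS n : gg n.+1 = gg n * ((t + n%:R) / (n.+1)%:R).
Proof. by rewrite /gg big_ord_recr. Qed.

Lemma t_ge0 : 0 <= t. Proof. exact: le_trans t1. Qed.

Lemma gg_ge0 n : 0 <= gg n.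
Proof.
rewrite /gg; apply: prodr_ge0 => i _; apply: divr_ge0; last exact: ler0n.
by apply: addr_ge0; [exact: t_ge0 | exact: ler0n].
Qed.

Lemma gg_mono m n : (m <= n)%N -> gg m <= gg n.
Proof.
elim: n => [|n IH]; first by rewrite leqn0 => /eqP ->.
rewrite leq_eqVlt => /orP[/eqP -> //|]; rewrite ltnS => /IH h.
apply: (le_trans h); rewrite ggS -{1}[gg n]mulr1; apply: ler_wpM2l; first exact: gg_ge0.
rewrite ler_pdivlMr ?ltr0Sn // mul1r -addn1 natrD addrC lerD2r.
by [].
Qed.

Lemma gg_sum n : t * \sum_(i < n) gg i = n%:R * gg n.
Proof.
elim: n => [|n IH]; first by rewrite big_ord0 mulr0 mul0r.
rewrite big_ord_recr /= mulrDr IH ggS mulrA -mulrDl.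
rewrite [RHS]mulrC mulrA divfK ?pnatr_eq0 // addrC. by [].
Qed.

Variable p : nat.
Hypothesis p_gt0 : (0 < p)%N.

Lemma gg_key n :
  p%:R * \sum_(i < n) (p %| i.+1)%N%:R * gg (n.-1 - i) <= \sum_(i < n) gg i.
Proof.
elim/ltn_ind: n => n IH.
have [np|pn] := ltnP n p.
  rewrite big1 ?mulr0; last first.
    move=> i _; have -> : (p %| i.+1)%N = false.
      apply/negbTE/negP => /(dvdn_leq (ltn0Sn _)); rewrite leqNgt.
      by rewrite (leq_ltn_trans (ltn_ord i) np).
    by rewrite mul0r.
  by apply: sumr_ge0 => i _; exact: gg_ge0.
have [r nE] : exists r, n = (p + r)%N by exists (n - p)%N; rewrite subnKC.
subst n.
rewrite big_split_ord /= mulrDr.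
have -> : \sum_(i < p) (p %| i.+1)%N%:R * gg ((p + r).-1 - i) = gg r.
  case: p p_gt0 {IH pn} => // p' _.
  rewrite big_ord_recr /= dvdnn mul1r big1 ?add0r.
    by rewrite addnC addnK.
  move=> i _; have -> : (p'.+1 %| i.+1)%N = false.
    apply/negbTE/negP => /(dvdn_leq (ltn0Sn _)); rewrite ltnS leqNgt.
    by rewrite ltn_ord.
  by rewrite mul0r.
have -> : \sum_(i < r) (p %| (p + i).+1)%N%:R * gg ((p + r).-1 - (p + i))
        = \sum_(i < r) (p %| i.+1)%N%:R * gg (r.-1 - i).
  apply: eq_bigr => i _; rewrite -addnS dvdn_addr // ; congr (_ * gg _).
  case: p p_gt0 {IH pn} => // p' _; case: r i => [|r] i; first by case: i.
  rewrite /=; lia.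
have hr : (r < p + r)%N by lia.
have h := IH r hr.
rewrite addnC big_split_ord /= addrC lerD //.
have -> : p%:R * gg r = \sum_(i < p) gg r by rewrite sumr_const card_ord mulr_natl.
apply: ler_sum => i _.
by apply: gg_mono; rewrite leq_addr.
Qed.

Variables (B a : K).
Hypotheses (tBa : t = B + a) (B0 : 0 <= B) (a0 : 0 <= a).

Lemma gg_bound (u c : nat -> K) :
  (forall n, 0 <= u n) -> u 0%N <= 1 ->
  (forall j, 0 <= c j) ->
  (forall j, c j <= B + (p %| j)%N%:R * (p%:R * a)) ->
  (forall n, n.+1%:R * u n.+1 <= \sum_(i < n.+1) u (n - i)%N * c i.+1) ->
  forall n, u n <= gg n.
Proof.
move=> u0 u01 c0 cB rec.
elim/ltn_ind => -[|n] IH; first by rewrite /gg big_ord0.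
have : n.+1%:R * u n.+1 <= n.+1%:R * gg n.+1.
  apply: (le_trans (rec n)).
  apply: (@le_trans _ _ (\sum_(i < n.+1) gg (n - i)%N * (B + (p %| i.+1)%N%:R * (p%:R * a)))).
    apply: ler_sum => i _; apply: (@le_trans _ _ (gg (n - i)%N * c i.+1)).
      apply: ler_wpM2r => //; apply: IH; rewrite ltnS; exact: leq_subr.
    by apply: ler_wpM2l => //; exact: gg_ge0.
  rewrite -gg_sum tBa mulrDl.
  under eq_bigr do rewrite mulrDr.
  rewrite big_split /= lerD //.
    rewrite mulr_sumr (reindex_inj rev_ord_inj) /=; apply: ler_sum => i _.
    rewrite subSS subKn; [by rewrite mulrC | by rewrite -ltnS].
  have := gg_key n.+1; rewrite /= => hk.
  apply: (le_trans _ (ler_wpM2l a0 hk)).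
  rewrite mulr_sumr mulr_sumr; apply: ler_sum => i _.
  rewrite le_eqVlt; apply/orP; left; apply/eqP; ring.
by rewrite ler_pM2l ?ltr0Sn.
Qed.

End Growth.


Section Omega.
Variable R : realType.
Local Notation C := (R[i]).
Lemma exists_root_unity (n : nat) : (1 < n)%N ->
  exists w : C, w ^+ n = 1 /\ w != 1.
Proof.
move=> n1.
pose P : {poly C} := \poly_(i < n) 1.
have sP : size P = n by rewrite /P size_poly_eq ?oner_eq0.
have /closed_rootP [w rw] : size P != 1 by rewrite sP; case: n n1 {P sP} => [|[|]].
have hw : \sum_(i < n) w ^+ i = 0.
  move: rw; rewrite /root /P horner_poly => /eqP h; rewrite -[RHS]h.
  by apply: eq_bigr => i _; rewrite mul1r.
exists w; split.
  by apply/eqP; rewrite -subr_eq0 subrX1 hw mulr0.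
apply/eqP => w1; move: hw; rewrite w1.
under eq_bigr do rewrite expr1n.
rewrite sumr_const card_ord => /eqP; rewrite pnatr_eq0; lia.
Qed.
End Omega.

Section Psi.
Variables (F : finFieldType) (p : nat) (pF : p \in [pchar F]) (R : realType).
Local Notation C := (R[i]).

Lemma exists_psi : exists psi : F -> C,
  [/\ forall x y, psi (x + y) = psi x * psi y, psi 0 = 1 & exists c, psi c != 1].
Proof.
pose FF := pPrimeCharType pF.
have n0 : (0 < \dim {: FF})%N.
  rewrite lt0n dimv_eq0; apply/negP => /eqP h.
  have : (1 : FF) \in fullv := memvf 1.
  by rewrite h memv0 oner_eq0.
pose i0 := Ordinal n0.
pose X := vbasis {: FF}.
have [w [wp w1]] := @exists_root_unity R (Zp_trunc (pdiv p)).+2 isT.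
exists (fun x : F => w ^+ (nat_of_ord (coord X i0 (x : FF)))); split.
- move=> x y /=.
  have -> : coord X i0 ((x + y : F) : FF) = coord X i0 (x : FF) + coord X i0 (y : FF).
    by rewrite -linearD.
  by rewrite /= (expr_mod _ wp) exprD.
- by rewrite (_ : coord X i0 ((0 : F) : FF) = 0) ?expr0 // linear0.
- exists (X`_i0 : FF).
  have -> : coord X i0 X`_i0 = 1.
    by rewrite coord_free ?eqxx //; exact: basis_free (vbasisP _).
  by rewrite /= expr1.
Qed.
End Psi.


Section Chars.
Variables (F : finFieldType) (p : nat) (pF : p \in [pchar F]) (R : realType).
Local Notation C := (R[i]).
Variable psi : F -> C.
Hypothesis psiD : forall x y, psi (x + y) = psi x * psi y.
Hypothesis psi0 : psi 0 = 1.
Variable c0 : F.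
Hypothesis psic : psi c0 != 1.

Lemma psi_sum (I : finType) (P : pred I) (f : I -> F) :
  psi (\sum_(i | P i) f i) = \prod_(i | P i) psi (f i).
Proof. exact: (big_morph psi psiD psi0). Qed.

Lemma psi_mulrn x n : psi (x *+ n) = psi x ^+ n.
Proof.
elim: n => [|n IH]; first by rewrite mulr0n expr0.
by rewrite mulrS psiD IH exprS.
Qed.

Lemma psiN x : psi (- x) * psi x = 1.
Proof. by rewrite -psiD addNr. Qed.

Lemma p_gt0 : (0 < p)%N.
Proof. exact: prime_gt0 (pcharf_prime pF). Qed.

Lemma norm_psi x : `|psi x| = 1.
Proof.
have h : psi x ^+ p = 1 by rewrite -psi_mulrn (mulrn_pchar pF) psi0.
apply/eqP; rewrite -(pexpr_eq1 p_gt0) ?normr_ge0 //.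
by rewrite -normrX h normr1.
Qed.

Lemma psi_neq0 x : psi x != 0.
Proof. by rewrite -normr_eq0 norm_psi oner_eq0. Qed.

Lemma conj_psi x : (psi x)^* = psi (- x).
Proof.
have h1 : psi x * (psi x)^* = 1 by rewrite -normCK norm_psi expr1n.
apply: (mulfI (psi_neq0 x)); rewrite h1 mulrC psiN //.
Qed.

Lemma sum_psi : \sum_(y : F) psi y = 0.
Proof.
have h : \sum_(y : F) psi y = psi c0 * \sum_(y : F) psi y.
  rewrite mulr_sumr (reindex_inj (addrI c0)) /=.
  by apply: eq_bigr => y _; rewrite psiD.
apply/eqP; move/eqP: h; rewrite -subr_eq0 -{1}(mul1r (\sum_y psi y)) -mulrBl mulf_eq0.
by rewrite subr_eq0 eq_sym (negbTE psic).
Qed.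

Lemma orth x : \sum_(b : F) psi (b * x) = (x == 0)%:R * #|F|%:R.
Proof.
have [->|x0] := eqVneq x 0.
  under eq_bigr do rewrite mulr0 psi0.
  by rewrite sumr_const mul1r.
by have := sum_psi; rewrite (reindex_inj (mulIf x0)) /= => ->; rewrite mul0r.
Qed.


Variable H : {group {unit F}}.
Definition SH (b : F) : C := \sum_(a in H) psi (b * FinRing.uval a).

Lemma SH_total : \sum_(c : F) `|SH c| ^+ 2 = #|F|%:R * #|H|%:R.
Proof.
have e1 : forall c, `|SH c| ^+ 2 =
    \sum_(a in H) \sum_(a' in H) psi (c * (FinRing.uval a - FinRing.uval a')).
  move=> c; rewrite normCK /SH rmorph_sum mulr_suml; apply: eq_bigr => a _.
  rewrite mulr_sumr; apply: eq_bigr => a' _.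
  by rewrite /= conj_psi -psiD mulrBr.
under eq_bigr do rewrite e1.
rewrite exchange_big /=.
under eq_bigr do rewrite exchange_big /=.
have e2 : forall a : {unit F}, a \in H ->
    \sum_(a' in H) \sum_(c : F) psi (c * (FinRing.uval a - FinRing.uval a')) = #|F|%:R.
  move=> a aH; under eq_bigr do rewrite orth subr_eq0 val_eqE.
  rewrite (bigD1 a) //= eqxx mul1r big1 ?addr0 // => a' /andP[_ /negbTE].
  by rewrite eq_sym => ->; rewrite mul0r.
rewrite (eq_bigr (fun _ => #|F|%:R)); last by move=> a aH; exact: e2.
by rewrite sumr_const mulr_natr.
Qed.

Lemma SH_mul b h : h \in H -> SH (b * FinRing.uval h) = SH b.
Proof.
move=> hH; rewrite /SH.
have -> : \sum_(a in H) psi (b * FinRing.uval h * FinRing.uval a) =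
          \sum_(a in H) psi (b * FinRing.uval (h * a)%g).
  by apply: eq_bigr => a _; rewrite /= mulrA.
rewrite [RHS](reindex_inj (mulgI h)) /=.
by apply: eq_bigl => a; rewrite groupMl.
Qed.

Lemma SH_bound b : b != 0 -> `|SH b| ^+ 2 <= #|F|%:R.
Proof.
move=> b0.
have Npos : (0 : C) < #|H|%:R by rewrite ltr0n cardG_gt0.
rewrite -(ler_pM2l Npos) [X in _ <= X]mulrC -SH_total.
have -> : #|H|%:R * `|SH b| ^+ 2 = \sum_(h in H) `|SH (b * FinRing.uval h)| ^+ 2.
  rewrite (eq_bigr (fun _ => `|SH b| ^+ 2)); last by move=> h hH; rewrite SH_mul.
  by rewrite sumr_const mulr_natl.
have inj : {in H &, injective (fun h : {unit F} => b * FinRing.uval h)}.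
  by move=> x y _ _ /(mulfI b0) /val_inj.
rewrite -(big_imset (fun c => `|SH c| ^+ 2) inj) /=.
rewrite [X in _ <= X](bigID (mem [set b * FinRing.uval x | x in H])) /=.
rewrite lerDl; apply: sumr_ge0 => c _; exact: exprn_ge0.
Qed.

Definition xb (b : F) (a : {unit F}) : C := psi (b * FinRing.uval a).

Lemma psum_SH b j : psum (xb b) H j = SH (b *+ j).
Proof.
rewrite /psum /SH; apply: eq_bigr => a _.
by rewrite /xb -psi_mulrn mulrnAl.
Qed.

Lemma E_bound (B a : C) b : b != 0 ->
  1 <= B + a -> 0 <= B -> 0 <= a ->
  (forall c, c != 0 -> `|SH c| <= B) -> #|H|%:R <= p%:R * a ->
  forall j, `|esym (xb b) H j| <= gg _ (B + a) j.
Proof.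
move=> b0 t1 B0 a0 SHB Hpa.
apply: (gg_bound _ _ t1 p p_gt0 B a (erefl _) a0 (fun j => `|esym (xb b) H j|) (fun j => `|psum (xb b) H j|)).
- by move=> n; exact: normr_ge0.
- by rewrite esym0 normr1.
- by move=> n; exact: normr_ge0.
- move=> j; rewrite psum_SH.
  have [pj|pj] := boolP (p %| j)%N.
    have -> : b *+ j = 0 by rewrite -mulr_natr (eqP (_ : j%:R == 0 :> F)) ?mulr0 // -(dvdn_pcharf pF).
    rewrite /SH.
    under eq_bigr do rewrite mul0r psi0.
    rewrite sumr_const normr_nat mul1r.
    by apply: (le_trans Hpa); rewrite lerDr.
  rewrite mul0r addr0; apply: SHB.
  by rewrite -mulr_natr mulf_eq0 negb_or b0 -(dvdn_pcharf pF).
- move=> n /=; rewrite -normr_nat -normrM newton.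
  apply: (le_trans (ler_norm_sum _ _ _)); apply: ler_sum => i _.
  by rewrite normrM normrX normrN1 expr1n mul1r normrM.
Qed.

Lemma E0 k : esym (xb 0) H k = ('C(#|H|, k))%:R.
Proof.
rewrite /esym -cards_draws -sum1_card natr_sum.
rewrite [RHS](eq_bigl (fun S : {set {unit F}} => (S \subset H) && (#|S| == k))); last first.
  by move=> S; rewrite inE.
apply: eq_bigr => S _; rewrite /xb.
by under eq_bigr do rewrite mul0r psi0; rewrite prodr_const expr1n.
Qed.

Lemma count_eq k : #|F|%:R * (M_H H k)%:R = \sum_(b : F) esym (xb b) H k.
Proof.
rewrite /esym /xb.
have e1 : forall b : F, \sum_(S : {set {unit F}} | (S \subset H) && (#|S| == k))
      \prod_(a in S) psi (b * FinRing.uval a) =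
    \sum_(S : {set {unit F}} | (S \subset H) && (#|S| == k))
      psi (b * \sum_(a in S) FinRing.uval a).
  by move=> b; apply: eq_bigr => S _; rewrite mulr_sumr psi_sum.
under eq_bigr do rewrite e1.
rewrite exchange_big /=.
under eq_bigr do rewrite orth.
rewrite -mulr_suml mulrC; congr (_ * _).
rewrite /M_H -sum1_card natr_sum [RHS]big_mkcond [LHS]big_mkcond /=.
apply: eq_bigr => S _; rewrite inE.
by case: (S \subset H); case: (#|S| == k); case: (_ == 0).
Qed.

End Chars.


Lemma binomR_gg (R : realType) (t : R) k : binomR (t + k%:R - 1) k = gg _ t k.
Proof.
rewrite /binomR /gg prodf_div; congr (_ / _).
  rewrite (reindex_inj rev_ord_inj) /=; apply: eq_bigr => i _.
  rewrite natrB ?ltn_ord // -addn1 natrD; ring.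
rewrite fact_prod natr_prod big_add1 /= big_mkord.
by apply: eq_bigr => i _.
Qed.

Local Open Scope complex_scope.

Lemma gg_map (R : realType) (t : R) k : gg R[i] (t%:C) k = (gg _ t k)%:C.
Proof.
rewrite /gg rmorph_prod; apply: eq_bigr => i _.
by rewrite fmorph_div rmorphD !rmorph_nat.
Qed.

Lemma norm_real (R : realType) (x : R) : `|x%:C| = (`|x|)%:C.
Proof.
by rewrite normc_def /= expr0n /= addr0 sqrtr_sqr.
Qed.

Theorem mainTheorem11 (F : finFieldType) (p m k : nat)
    (H : {group {unit F}}) (R : realType) :
  p \in [pchar F] ->
  (0 < m)%N -> (m %| #|F|.-1)%N ->
  (#|[set: {unit F}] : H|)%g = m ->
  (1 <= k <= #|F|.-1 %/ m)%N ->
  `| (M_H H k)%:R - (#|F|%:R)^-1 * ('C(#|F|.-1 %/ m, k))%:R : R |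
    <= binomR (Num.sqrt (#|F|%:R) + k%:R - 1 + #|F|%:R / (m%:R * p%:R)) k.
Proof.
move=> pF m0 mdiv idx /andP[k1 kN].
have [psi [psiD psi0 [c0 psic]]] := exists_psi _ _ pF R.
have pP : (0 < p)%N := p_gt0 _ _ pF.
set q := #|F|.
have q1 : (1 < q)%N := card_finNzRing_gt1 F.
have HmN : (#|H| * m)%N = q.-1.
  by rewrite -idx Lagrange ?subsetT // card_finField_unit.
have cardH : #|H| = (q.-1 %/ m)%N by rewrite -HmN mulnK.
rewrite -cardH.
set sq : R := Num.sqrt q%:R.
set a : R := q%:R / (m%:R * p%:R).
have -> : sq + k%:R - 1 + a = (sq + a) + k%:R - 1 by ring.
rewrite binomR_gg.
have sq1 : 1 <= sq.
  rewrite /sq -[X in X <= _]sqrtr1; apply: ler_wsqrtr; rewrite ler1n; lia.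
have a0 : 0 <= a by rewrite /a divr_ge0 // mulr_ge0.
have sqq : sq ^+ 2 = q%:R by rewrite /sq sqr_sqrtr ?ler0n.
have HpaR : #|H|%:R <= p%:R * a.
  have pn : p%:R != 0 :> R by rewrite pnatr_eq0 -lt0n.
  have mn : m%:R != 0 :> R by rewrite pnatr_eq0 -lt0n.
  rewrite /a (_ : p%:R * (q%:R / (m%:R * p%:R)) = q%:R / m%:R); last by rewrite invfM mulrCA [p%:R * (_ * _)]mulrCA mulfV // mulr1.
  rewrite ler_pdivlMr ?ltr0n // -natrM HmN ler_nat; lia.
clearbody sq a.
have t1 : 1 <= sq + a by rewrite -[1]addr0 lerD.
have t1C : 1 <= sq%:C + a%:C by rewrite -rmorphD -(rmorph1 (real_complex R)) lecR.
have B0 : 0 <= sq%:C by rewrite ler0c (le_trans ler01 sq1).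
have a0C : 0 <= a%:C by rewrite ler0c.
have SHB : forall c : F, c != 0 -> `|SH _ _ psi H c| <= sq%:C.
  move=> c cn0; have h := SH_bound _ _ pF R psi psiD psi0 c0 psic H c cn0.
  rewrite -(ler_pXn2r (isT : (0 < 2)%N)) ?nnegrE ?normr_ge0 //.
  have -> : sq%:C ^+ 2 = #|F|%:R :> R[i] by rewrite -rmorphXn sqq rmorph_nat.
  exact: h.
have Hpa : #|H|%:R <= p%:R * a%:C.
  have -> : (p%:R * a%:C) = (p%:R * a)%:C by rewrite rmorphM rmorph_nat.
  have -> : (#|H|%:R : R[i]) = (#|H|%:R : R)%:C by rewrite rmorph_nat.
  by rewrite lecR.
have Eb : forall b : F, b != 0 -> `|esym (xb _ _ psi b) H k| <= (gg _ (sq + a) k)%:C.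
  move=> b bn0; rewrite -gg_map rmorphD.
  exact: (E_bound _ _ pF R psi psiD psi0 H _ _ b bn0 t1C B0 a0C SHB Hpa k).
have G0 : 0 <= (gg _ (sq + a) k)%:C by rewrite ler0c gg_ge0.
have main : `|q%:R * (M_H H k)%:R - ('C(#|H|, k))%:R : R[i]| <= (q.-1)%:R * (gg _ (sq + a) k)%:C.
  rewrite (count_eq _ _ psi psiD psi0 c0 psic H k) (bigD1 0) //= E0 // addrC addrK.
  apply: (le_trans (ler_norm_sum _ _ _)).
  apply: (le_trans (ler_sum _ (fun b hb => Eb b hb))).
  rewrite sumr_const -[in X in X <= _]mulr_natl; apply: ler_wpM2r => //.
  rewrite ler_nat -(cardC1 (0 : F)).
  by apply: subset_leq_card; apply/subsetP => x; rewrite !inE.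
have qpos : (0 : R[i]) < q%:R by rewrite ltr0n (ltn_trans _ q1).
rewrite -lecR -norm_real rmorphB rmorphM fmorphV !rmorph_nat.
have -> : ((M_H H k)%:R - q%:R^-1 * ('C(#|H|, k))%:R : R[i])
    = (q%:R * (M_H H k)%:R - ('C(#|H|, k))%:R) / q%:R.
  rewrite mulrBl [q%:R * _]mulrC -mulrA mulfV ?mulr1 ?gt_eqF //.
  by rewrite [_ / q%:R]mulrC.
rewrite normrM normfV normr_nat ler_pdivrMr //.
apply: (le_trans main); rewrite mulrC; apply: ler_wpM2l => //.
by rewrite ler_nat leq_pred.
Qed.
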